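(* Let $g$ and $h$ be any two encoders (in the applications, $g=f_t$ is the current model and $h=f_{t-1}$ the previous one) and let $\mathcal{D}$ be any task distribution. Then $$L_{\mathrm{con}}(g;\mathcal{D}) \le \alpha\, L_{\mathrm{con}}(h;\mathcal{D}) + L_{\mathrm{dis}}(g;h,\mathcal{D}) + \beta,$$ $$L_{\mathrm{con}}(g;\mathcal{D}) \ge \alpha\, L_{\mathrm{con}}(h;\mathcal{D}) + L_{\mathrm{dis}}(g;h,\mathcal{D}) + \beta',$$ where $\alpha=\frac{2e^2}{1+e^2}$, $\beta = 2-\alpha+\alpha\log\frac{\alpha}{2}$ and $\beta'=-\alpha\log(1+e^2)-\alpha$.
   Context: Let $\mathcal X$ be a measurable input space and $d\ge 1$. An encoder is a measurable map $f:\mathcal X\to\mathbb R^d$ with $\|f(x)\|_2=1$ for all $x$. A task distribution $\mathcal D$ consists of a probability distribution $\mu$ on a countable set of classes together with, for each class $c$, a probability distribution $\mathcal D_c$ on $\mathcal X$. Sampling scheme: $c^+\sim\mu$ and $c^-\sim\mu$ independently; given $c^+$, $x,x^+$ are drawn i.i.d. from $\mathcal D_{c^+}$; given $c^-$, $x^-\sim\mathcal D_{c^-}$ independently. Let $\ell(v)=\log(1+e^{-v})$. The contrastive loss is $L_{\mathrm{con}}(f;\mathcal D)=\mathbb E\big[\ell\big(f(x)^\top(f(x^+)-f(x^-))\big)\big]$. For an encoder $f$ let $\mathbf p(f;x,x^+,x^-)=\mathrm{softmax}\big(f(x)^\top f(x^+),\,f(x)^\top f(x^-)\big)\in\mathbb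 R^2$. For encoders $g,h$ the distillation loss is $L_{\mathrm{dis}}(g;h,\mathcal D)=\mathbb E\big[-\mathbf p(h;x,x^+,x^-)\cdot\log\mathbf p(g;x,x^+,x^-)\big]$ (logarithm taken componentwise), with the same sampling scheme. *)

(* Defs.v *)
From HB Require Import structures.
From mathcomp Require Import all_boot all_order all_algebra.
From mathcomp Require Import all_classical all_reals all_analysis.
Set Implicit Arguments. Unset Strict Implicit. Unset Printing Implicit Defensive.
Import Order.TTheory GRing.Theory Num.Theory.
Local Open Scope ring_scope.
Local Open Scope classical_set_scope.

Section Defs.
Context {R : realType}.

Definition dotv (n : nat) (u v : 'rV[R]_n) : R := \sum_(i < n) u ord0 i * v ord0 i.

Definition is_encoder (dX : measure_display) (X : measurableType dX) (n : nat)
  (f : X -> 'rV[R]_n) : Prop :=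
  (forall i : 'I_n, measurable_fun setT (fun x => f x ord0 i)) /\
  (forall x, \sum_(i < n) (f x ord0 i) ^+ 2 = 1).

Definition is_pmf (C : countType) (mu : C -> R) : Prop :=
  (forall c, 0 <= mu c) /\ (\esum_(c in [set: C]) (mu c)%:E = 1%E).

Definition logistic (v : R) : R := ln (1 + expR (- v)).

Definition softmax1 (a b : R) : R := expR a / (expR a + expR b).
Definition softmax2 (a b : R) : R := expR b / (expR a + expR b).

(* expectation under the sampling scheme: c+ ~ mu, c- ~ mu independent,
   x, x+ iid ~ D_{c+}, x- ~ D_{c-} *)
Definition task_expect (dX : measure_display) (X : measurableType dX)
  (C : countType) (mu : C -> R) (D : C -> probability X R)
  (F : X -> X -> X -> R) : \bar R :=
  \esum_(cc in [set: C * C])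
    ((mu cc.1 * mu cc.2)%:E *
     \int[D cc.1]_x \int[D cc.1]_xp \int[D cc.2]_xn (F x xp xn)%:E)%E.

Definition L_con (dX : measure_display) (X : measurableType dX) (n : nat)
  (C : countType) (mu : C -> R) (D : C -> probability X R)
  (f : X -> 'rV[R]_n) : \bar R :=
  task_expect mu D (fun x xp xn => logistic (dotv (f x) (f xp - f xn))).

Definition L_dis (dX : measure_display) (X : measurableType dX) (n : nat)
  (C : countType) (mu : C -> R) (D : C -> probability X R)
  (g h : X -> 'rV[R]_n) : \bar R :=
  task_expect mu D (fun x xp xn =>
    let a := dotv (h x) (h xp) in let b := dotv (h x) (h xn) in
    let a' := dotv (g x) (g xp) in let b' := dotv (g x) (g xn) in
    - (softmax1 a b * ln (softmax1 a' b') + softmax2 a b * ln (softmax2 a' b'))).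

Definition alpha_c : R := 2 * expR 2 / (1 + expR 2).
Definition beta_c : R := 2 - alpha_c + alpha_c * ln (alpha_c / 2).
Definition beta'_c : R := - alpha_c * ln (1 + expR 2) - alpha_c.

End Defs.

(* Main.v *)
Require Import Defs.
From HB Require Import structures.
From mathcomp Require Import all_boot all_order all_algebra.
From mathcomp Require Import all_classical all_reals all_analysis.
From mathcomp Require Import measurable_realfun.
From mathcomp Require Import ring lra.
Import Order.TTheory GRing.Theory Num.Theory.
Local Open Scope ring_scope.
Local Open Scope classical_set_scope.

Section EsumAux.
Local Open Scope ereal_scope.
Lemma esumZl {R : realType} (T : choiceType) (S : set T) (a : T -> \bar R) (r : R) :
  (0 <= r)%R -> (forall i, 0 <= a i) ->
  \esum_(i in S) (r%:E * a i) = r%:E * \esum_(i in S) a i.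
Proof.
move=> r0 a0; rewrite /esum -ereal_supZl //; last first.
  by apply/set0P; exists 0; exists set0; [exact: fsets_set0 | rewrite fsbig_set0].
congr ereal_sup; apply/seteqP; split => x /=.
  by move=> [A HA <-]; exists (\sum_(i \in A) a i); [exists A|rewrite ge0_mule_fsumr].
by move=> [y [A HA <-] <-]; exists A => //; rewrite ge0_mule_fsumr.
Qed.

Lemma esum_pmf2 {R : realType} (C : countType) (mu : C -> R) : is_pmf mu ->
  \esum_(cc in [set: (C * C)%type]) (mu cc.1 * mu cc.2)%:E = 1.
Proof.
move=> [mu0 mu1].
have -> : [set: (C * C)%type] = [set: C] `*`` (fun _ => [set: C]).
  by apply/seteqP; split.
rewrite -(@esum_esum R C C setT (fun _ => setT) (fun i j => (mu i * mu j)%:E)); last first.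
  by move=> i j _ _; rewrite lee_fin mulr_ge0.
under eq_esum do under eq_esum do rewrite EFinM.
under eq_esum do rewrite esumZl //.
under eq_esum do rewrite mu1 mule1.
exact: mu1.
Qed.

End EsumAux.

Section Meas.
Context {R : realType} {dX : measure_display} {X : measurableType dX}.

Definition M3 (F : X -> X -> X -> R) :=
  measurable_fun [set: ((X * X) * X)%type] (fun p => F p.1.1 p.1.2 p.2).

Lemma M3_inner F : M3 F -> forall x y, measurable_fun [set: X] (F x y).
Proof.
move=> mF x y.
exact: (measurableT_comp mF (@pair1_measurable _ _ (X * X)%type X (x, y))).
Qed.

Lemma M3_mid (Q : probability X R) F : M3 F -> (forall x y z, 0 <= F x y z) ->
  forall x, measurable_fun [set: X] (fun y => (\int[Q]_z (F x y z)%:E)%E).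
Proof.
move=> mF F0 x.
have mf : measurable_fun [set: (X * X)%type] (fun p => (F x p.1 p.2)%:E).
  apply/measurable_EFinP.
  apply: (measurableT_comp mF (f := fun p => F p.1.1 p.1.2 p.2)
    (g := fun p : (X * X)%type => ((x, p.1), p.2))).
  apply: measurable_fun_pair => //.
  exact: (measurableT_comp (pair1_measurable x) measurable_fst).
have := @measurable_fun_fubini_tonelli_F _ _ X X R Q _ mf.
by apply => p /=; rewrite lee_fin.
Qed.

Lemma M3_outer (P Q : probability X R) F : M3 F -> (forall x y z, 0 <= F x y z) ->
  measurable_fun [set: X] (fun x => (\int[P]_y \int[Q]_z (F x y z)%:E)%E).
Proof.
move=> mF F0.
have mf : measurable_fun [set: ((X * X) * X)%type] (fun p => (F p.1.1 p.1.2 p.2)%:E).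
  exact/measurable_EFinP.
have mK := @measurable_fun_fubini_tonelli_F _ _ (X * X)%type X R Q _ mf
  (fun p => (_ : (0 <= _)%E)).
have mK' : measurable_fun [set: (X * X)%type] (fun p => (\int[Q]_z (F p.1 p.2 z)%:E)%E).
  apply: mK => p; rewrite lee_fin; exact: F0.
have := @measurable_fun_fubini_tonelli_F _ _ X X R P _ mK'.
apply => p /=; apply: integral_ge0 => z _; rewrite lee_fin; exact: F0.
Qed.

Local Open Scope ereal_scope.

Lemma int_lin (P : probability X R) (f g : X -> \bar R) (a c : R) :
  (0 <= a)%R -> (0 <= c)%R ->
  measurable_fun [set: X] f -> measurable_fun [set: X] g ->
  (forall x, 0 <= f x) -> (forall x, 0 <= g x) ->
  \int[P]_x (a%:E * f x + g x + c%:E) = a%:E * \int[P]_x f x + \int[P]_x g x + c%:E.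
Proof.
move=> a0 c0 mf mg f0 g0.
have maf : measurable_fun [set: X] (fun x => a%:E * f x) by exact: measurable_funeM.
have af0 x : 0 <= a%:E * f x by rewrite mule_ge0 // lee_fin.
rewrite (@ge0_integralD _ _ _ P setT measurableT (fun x => a%:E * f x + g x) (fun=> c%:E)); last 4 first.
- by move=> x _; rewrite adde_ge0.
- exact: emeasurable_funD.
- by move=> x _ /=; rewrite lee_fin.
- exact: measurable_cst.
rewrite (@ge0_integralD _ _ _ P setT measurableT (fun x => a%:E * f x) g) //.
rewrite ge0_integralZl //.  
rewrite integral_cst //; congr (_ + _); have := probability_setT P; move=> /= ->; exact: mule1.
Qed.

Definition I3 (P Q : probability X R) (F : X -> X -> X -> R) :=
  \int[P]_x \int[P]_xp \int[Q]_xn (F x xp xn)%:E.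

Lemma I3_lin (P Q : probability X R) (G H : X -> X -> X -> R) (a c : R) :
  (0 <= a)%R -> (0 <= c)%R -> M3 G -> M3 H ->
  (forall x y z, 0 <= G x y z)%R -> (forall x y z, 0 <= H x y z)%R ->
  I3 P Q (fun x y z => a * G x y z + H x y z + c)%R =
  a%:E * I3 P Q G + I3 P Q H + c%:E.
Proof.
move=> a0 c0 mG mH G0 H0; rewrite /I3.
have inner x y : \int[Q]_z ((a * G x y z + H x y z + c)%R)%:E =
   a%:E * \int[Q]_z (G x y z)%:E + \int[Q]_z (H x y z)%:E + c%:E.
  transitivity (\int[Q]_z (a%:E * (G x y z)%:E + (H x y z)%:E + c%:E)).
    by apply: eq_integral => z _; rewrite !EFinD EFinM.
  apply: (int_lin Q (fun z => (G x y z)%:E) (fun z => (H x y z)%:E)) => //.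
  - by apply/measurable_EFinP; exact: M3_inner.
  - by apply/measurable_EFinP; exact: M3_inner.
  - by move=> z; rewrite lee_fin.
  - by move=> z; rewrite lee_fin.
have mid x : \int[P]_y \int[Q]_z ((a * G x y z + H x y z + c)%R)%:E =
   a%:E * \int[P]_y \int[Q]_z (G x y z)%:E + \int[P]_y \int[Q]_z (H x y z)%:E + c%:E.
  under eq_integral do rewrite inner.
  rewrite int_lin //.
  - exact: M3_mid.
  - exact: M3_mid.
  - by move=> y; apply: integral_ge0 => z _; rewrite lee_fin.
  - by move=> y; apply: integral_ge0 => z _; rewrite lee_fin.
under eq_integral do rewrite mid.
rewrite int_lin //.
- exact: M3_outer.
- exact: M3_outer.
- by move=> x; apply: integral_ge0 => y _; apply: integral_ge0 => z _; rewrite lee_fin.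
- by move=> x; apply: integral_ge0 => y _; apply: integral_ge0 => z _; rewrite lee_fin.
Qed.

Lemma I3_le (P Q : probability X R) (F G : X -> X -> X -> R) :
  M3 F -> M3 G -> (forall x y z, 0 <= F x y z)%R ->
  (forall x y z, F x y z <= G x y z)%R -> I3 P Q F <= I3 P Q G.
Proof.
move=> mF mG F0 FG.
have G0 x y z : (0 <= G x y z)%R by apply: le_trans (FG x y z).
rewrite /I3; apply: ge0_le_integral => //.
- by move=> x _; apply: integral_ge0 => y _; apply: integral_ge0 => z _; rewrite lee_fin.
- exact: M3_outer.
- exact: M3_outer.
move=> x _; apply: ge0_le_integral => //.
- by move=> y _; apply: integral_ge0 => z _; rewrite lee_fin.
- exact: M3_mid.
- exact: M3_mid.
move=> y _; apply: ge0_le_integral => //.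
- by move=> z _; rewrite lee_fin.
- by apply/measurable_EFinP; exact: M3_inner.
- by apply/measurable_EFinP; exact: M3_inner.
by move=> z _; rewrite lee_fin.
Qed.

Lemma I3_ge0 (P Q : probability X R) F : (forall x y z, 0 <= F x y z)%R -> 0 <= I3 P Q F.
Proof.
by move=> F0; apply: integral_ge0 => x _; apply: integral_ge0 => y _;
  apply: integral_ge0 => z _; rewrite lee_fin.
Qed.

Section TE.
Variables (C : countType) (mu : C -> R) (D : C -> probability X R).
Hypothesis pmf : is_pmf mu.

Definition TE (F : X -> X -> X -> R) :=
  \esum_(cc in [set: (C * C)%type]) ((mu cc.1 * mu cc.2)%:E * I3 (D cc.1) (D cc.2) F).

Let w0 cc : (0 <= mu cc.1 * mu cc.2)%R.
Proof. by case: pmf => m0 _; rewrite mulr_ge0. Qed.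

Lemma TE_lin (G H : X -> X -> X -> R) (a c : R) :
  (0 <= a)%R -> (0 <= c)%R -> M3 G -> M3 H ->
  (forall x y z, 0 <= G x y z)%R -> (forall x y z, 0 <= H x y z)%R ->
  TE (fun x y z => a * G x y z + H x y z + c)%R =
  a%:E * TE G + TE H + c%:E.
Proof.
move=> a0 c0 mG mH G0 H0; rewrite /TE.
have IG0 cc : 0 <= I3 (D cc.1) (D cc.2) G by exact: I3_ge0.
have IH0 cc : 0 <= I3 (D cc.1) (D cc.2) H by exact: I3_ge0.
transitivity (\esum_(cc in [set: (C * C)%type])
   (a%:E * ((mu cc.1 * mu cc.2)%:E * I3 (D cc.1) (D cc.2) G) +
    (mu cc.1 * mu cc.2)%:E * I3 (D cc.1) (D cc.2) H +
    c%:E * (mu cc.1 * mu cc.2)%:E)).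
  apply: eq_esum => cc _.
  rewrite I3_lin; [|exact: a0|exact: c0|exact: mG|exact: mH|exact: G0|exact: H0].
  have aIG0 : 0 <= a%:E * I3 (D cc.1) (D cc.2) G by apply: mule_ge0; rewrite ?lee_fin.
  rewrite ge0_muleDr; [|exact: adde_ge0|by rewrite lee_fin].
  rewrite ge0_muleDr; [|exact: aIG0|exact: IH0].
  by rewrite (muleC _ c%:E) muleA (muleC _ a%:E) -muleA.
have wI0 (F : X -> X -> X -> R) : (forall x y z, 0 <= F x y z)%R ->
  forall cc, 0 <= (mu cc.1 * mu cc.2)%:E * I3 (D cc.1) (D cc.2) F.
  move=> F0 cc; apply: mule_ge0; [by rewrite lee_fin|exact: I3_ge0].
rewrite esumD; last first.
  by move=> cc _; apply: mule_ge0; rewrite lee_fin.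
  by move=> cc _; apply: adde_ge0; [apply: mule_ge0; [rewrite lee_fin|exact: wI0]|exact: wI0].
rewrite esumD; last first.
  by move=> cc _; exact: wI0.
  by move=> cc _; apply: mule_ge0; [rewrite lee_fin|exact: wI0].
rewrite esumZl; [|exact: a0|by move=> cc; exact: wI0].
rewrite esumZl; [|exact: c0|by move=> cc; rewrite lee_fin].
by rewrite esum_pmf2; [rewrite mule1|exact: pmf].
Qed.

Lemma TE_le (F G : X -> X -> X -> R) :
  M3 F -> M3 G -> (forall x y z, 0 <= F x y z)%R ->
  (forall x y z, F x y z <= G x y z)%R -> TE F <= TE G.
Proof.
move=> mF mG F0 FG; apply: le_esum => cc _.
rewrite lee_wpmul2l; [by [] | by rewrite lee_fin | exact: I3_le].
Qed.
End TE.
End Meas.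
Section PW.
Context {R : realType}.

Lemma ln_le_sub1 (z : R) : 0 < z -> ln z <= z - 1.
Proof. move=> z0; have h : 1 + (z - 1) = z by ring. rewrite -{1}h; apply: le_ln1Dx; lra. Qed.

Lemma ln_ge_1subinv (z : R) : 0 < z -> 1 - z^-1 <= ln z.
Proof.
move=> z0; have zi : 0 < z^-1 by rewrite invr_gt0.
have := ln_le_sub1 _ zi; rewrite lnV ?posrE //.
lra.
Qed.

Lemma upper_pw (E d : R) : 0 < E -> d <= 2 ->
  E / (1 + E) * d <= alpha_c * ln (1 + E) + beta_c.
Proof.
move=> E0 d2; rewrite /beta_c.
have e20 : 0 < expR 2 :> R by exact: expR_gt0.
have al0 : 0 < alpha_c :> R by rewrite /alpha_c; apply: divr_gt0; [apply: mulr_gt0|apply: addr_gt0].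
have y0 : 0 < 1 + E by apply: addr_gt0.
have s0 : 0 <= E / (1 + E) by apply: divr_ge0; apply: ltW.
have h1 : E / (1 + E) * d <= E / (1 + E) * 2 by rewrite ler_wpM2l.
have a20 : 0 < (alpha_c : R) / 2 by apply: divr_gt0.
have h2 : ln (1 + E) + ln ((alpha_c : R) / 2) = ln ((1 + E) * ((alpha_c : R) / 2)).
  by rewrite [in RHS]lnM ?posrE.
have h3 := ln_ge_1subinv _ (mulr_gt0 y0 a20).
have h4 : (alpha_c : R) * (1 - ((1 + E) * ((alpha_c : R) / 2))^-1) = (alpha_c : R) - 2 / (1 + E).
  by field; rewrite ?gt_eqF.
have h5 : E / (1 + E) * 2 = 2 - 2 / (1 + E) by field; rewrite gt_eqF.
have h6 : (alpha_c : R) * (1 - ((1 + E) * ((alpha_c : R) / 2))^-1) <=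
          (alpha_c : R) * (ln (1 + E) + ln ((alpha_c : R) / 2)).
  by rewrite h2 ler_wpM2l // ltW.
lra.
Qed.

Lemma lower_pw (E d : R) : 0 < E -> E <= expR 2 -> -2 <= d ->
  alpha_c * ln (1 + E) + beta'_c <= E / (1 + E) * d.
Proof.
move=> E0 Ee d2; rewrite /beta'_c.
have e20 : 0 < expR 2 :> R by exact: expR_gt0.
have y10 : 0 < 1 + expR 2 :> R by apply: addr_gt0.
have al0 : 0 < alpha_c :> R by rewrite /alpha_c; apply: divr_gt0; [apply: mulr_gt0|apply: addr_gt0].
have y0 : 0 < 1 + E by apply: addr_gt0.
have s0 : 0 <= E / (1 + E) by apply: divr_ge0; apply: ltW.
have h1 : E / (1 + E) * (-2) <= E / (1 + E) * d by rewrite ler_wpM2l.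
have h2 : ln (1 + E) - ln (1 + expR 2) = ln ((1 + E) / (1 + expR 2)).
  by rewrite ln_div ?posrE.
have h3 := ln_le_sub1 _ (divr_gt0 y0 y10).
have h6 : (alpha_c : R) * ln ((1 + E) / (1 + expR 2)) <= (alpha_c : R) * ((1 + E) / (1 + expR 2) - 1).
  by rewrite ler_wpM2l // ltW.
have h7 : 0 <= ((1 + expR 2) - (1 + E)) * (2 * expR 2 * (1 + E) + 2 * (1 + expR 2)) / ((1 + E) * (1 + expR 2) ^+ 2).
  apply: divr_ge0; last by apply: ltW; apply: mulr_gt0 => //; apply: exprn_gt0.
  apply: mulr_ge0; first by lra.
  apply: ltW; apply: addr_gt0; [apply: mulr_gt0 => //; apply: mulr_gt0 => //|apply: mulr_gt0 => //].
have h8 : ((1 + expR 2) - (1 + E)) * (2 * expR 2 * (1 + E) + 2 * (1 + expR 2)) / ((1 + E) * (1 + expR 2) ^+ 2) =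
   -2 + 2 / (1 + E) - (alpha_c : R) * ((1 + E) / (1 + expR 2) - 1) + (alpha_c : R).
  by rewrite /alpha_c; field; rewrite ?gt_eqF.
have h5 : E / (1 + E) * (-2) = -2 + 2 / (1 + E) by field; rewrite gt_eqF.
have h9 : (alpha_c : R) * ln (1 + E) - (alpha_c : R) * ln (1 + expR 2) = (alpha_c : R) * ln ((1 + E) / (1 + expR 2)).
  by rewrite -h2 mulrBr.
lra.
Qed.
End PW.
Section Enc.
Context {R : realType} {n : nat}.

Lemma dotv_subr (u v w : 'rV[R]_n) : dotv u (v - w) = dotv u v - dotv u w.
Proof.
rewrite /dotv -sumrB; apply: eq_bigr => i _; rewrite !mxE mulrBr.
by [].
Qed.

Lemma dotv_bound (u v : 'rV[R]_n) :
  \sum_(i < n) (u ord0 i) ^+ 2 = 1 -> \sum_(i < n) (v ord0 i) ^+ 2 = 1 ->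
  -1 <= dotv u v <= 1.
Proof.
move=> hu hv.
have h1 : 0 <= \sum_(i < n) ((u ord0 i) ^+ 2 + (v ord0 i) ^+ 2 - 2 * (u ord0 i * v ord0 i)).
  apply: sumr_ge0 => i _.
  have -> : (u ord0 i) ^+ 2 + (v ord0 i) ^+ 2 - 2 * (u ord0 i * v ord0 i) =
            (u ord0 i - v ord0 i) ^+ 2 by ring.
  exact: sqr_ge0.
have h2 : 0 <= \sum_(i < n) ((u ord0 i) ^+ 2 + (v ord0 i) ^+ 2 + 2 * (u ord0 i * v ord0 i)).
  apply: sumr_ge0 => i _.
  have -> : (u ord0 i) ^+ 2 + (v ord0 i) ^+ 2 + 2 * (u ord0 i * v ord0 i) =
            (u ord0 i + v ord0 i) ^+ 2 by ring.
  exact: sqr_ge0.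
rewrite sumrB !big_split /= -mulr_sumr hu hv in h1.
rewrite !big_split /= -mulr_sumr hu hv in h2.
rewrite /dotv; apply/andP; split; lra.
Qed.

Lemma sm1E (s t : R) : softmax1 s t = (1 + expR (t - s))^-1.
Proof.
rewrite /softmax1.
have -> : expR t = expR s * expR (t - s) by rewrite -expRD; congr expR; ring.
have := expR_gt0 s; have := expR_gt0 (t - s) => h1 h2.
have h3 : 0 < 1 + expR (t - s) by apply: addr_gt0.
have h4 : 0 < expR s + expR s * expR (t - s) by apply: addr_gt0 => //; apply: mulr_gt0.
by field; rewrite !gt_eqF.
Qed.

Lemma sm2E (s t : R) : softmax2 s t = expR (t - s) / (1 + expR (t - s)).
Proof.
rewrite /softmax2.
have -> : expR t = expR s * expR (t - s) by rewrite -expRD; congr expR; ring.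
have := expR_gt0 s; have := expR_gt0 (t - s) => h1 h2.
have h3 : 0 < 1 + expR (t - s) by apply: addr_gt0.
have h4 : 0 < expR s + expR s * expR (t - s) by apply: addr_gt0 => //; apply: mulr_gt0.
by field; rewrite !gt_eqF.
Qed.

Lemma sigE (u : R) : expR u / (1 + expR u) = expR (u - ln (1 + expR u)).
Proof.
have h : 0 < 1 + expR u by rewrite addr_gt0 // expR_gt0.
by rewrite expRB lnK // posrE.
Qed.

Lemma dis_id (a b s t : R) :
  - (softmax1 a b * ln (softmax1 s t) + softmax2 a b * ln (softmax2 s t)) =
  ln (1 + expR (t - s)) - expR (b - a) / (1 + expR (b - a)) * (t - s).
Proof.
rewrite !sm1E !sm2E.
have hK : 0 < expR (t - s) := expR_gt0 _.
have hy : 0 < 1 + expR (t - s) by rewrite addr_gt0.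
have hK' : 0 < expR (b - a) := expR_gt0 _.
have hy' : 0 < 1 + expR (b - a) by rewrite addr_gt0.
rewrite lnV ?posrE // ln_div ?posrE // expRK.
field; rewrite gt_eqF //.
Qed.

End Enc.

Section Main.
Context {R : realType} {dX : measure_display} {X : measurableType dX} {n : nat}.

Definition Fcon (f : X -> 'rV[R]_n) := fun x xp xn => logistic (dotv (f x) (f xp - f xn)).
Definition Fdis (g h : X -> 'rV[R]_n) := fun x xp xn =>
    let a := dotv (h x) (h xp) in let b := dotv (h x) (h xn) in
    let a' := dotv (g x) (g xp) in let b' := dotv (g x) (g xn) in
    - (softmax1 a b * ln (softmax1 a' b') + softmax2 a b * ln (softmax2 a' b')).

Let T3 := ((X * X) * X)%type.

Lemma mdot (f : X -> 'rV[R]_n) (k1 k2 : T3 -> X) :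
  (forall i, measurable_fun [set: X] (fun x => f x ord0 i)) ->
  measurable_fun [set: T3] k1 -> measurable_fun [set: T3] k2 ->
  measurable_fun [set: T3] (fun p => dotv (f (k1 p)) (f (k2 p))).
Proof.
move=> hf m1 m2; rewrite /dotv.
apply: measurable_sum => i.
by apply: measurable_funM; apply: measurableT_comp (hf i) _.
Qed.

Let m11 : measurable_fun [set: T3] (fun p : T3 => p.1.1).
Proof. exact: measurableT_comp measurable_fst measurable_fst. Qed.
Let m12 : measurable_fun [set: T3] (fun p : T3 => p.1.2).
Proof. exact: measurableT_comp measurable_snd measurable_fst. Qed.
Let m2 : measurable_fun [set: T3] (fun p : T3 => p.2).
Proof. exact: measurable_snd. Qed.

Let phi (v : R) := ln (1 + expR v).
Let mphi : measurable_fun [set: R] phi.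
Proof.
apply: measurableT_comp => //; apply: measurable_funD => //.
Qed.
Let psi (v : R) := expR (v - ln (1 + expR v)).
Let mpsi : measurable_fun [set: R] psi.
Proof.
apply: measurableT_comp => //; apply: measurable_funB => //.
Qed.

Lemma Fcon_E f x y z : Fcon f x y z = phi (dotv (f x) (f z) - dotv (f x) (f y)).
Proof. by rewrite /Fcon /logistic dotv_subr opprB. Qed.

Lemma Fdis_E g h x y z : Fdis g h x y z =
  phi (dotv (g x) (g z) - dotv (g x) (g y)) -
  psi (dotv (h x) (h z) - dotv (h x) (h y)) * (dotv (g x) (g z) - dotv (g x) (g y)).
Proof. by rewrite /Fdis /= dis_id /psi -sigE. Qed.

Lemma M3_Fcon f : is_encoder f -> M3 (Fcon f).
Proof.
move=> [hf _]; rewrite /M3.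
under eq_fun do rewrite Fcon_E.
apply: measurableT_comp mphi _.
by apply: measurable_funB; apply: mdot.
Qed.

Lemma M3_Fdis g h : is_encoder g -> is_encoder h -> M3 (Fdis g h).
Proof.
move=> [hg _] [hh _]; rewrite /M3.
under eq_fun do rewrite Fdis_E.
apply: measurable_funB.
  by apply: measurableT_comp mphi _; apply: measurable_funB; apply: mdot.
apply: measurable_funM.
  by apply: measurableT_comp mpsi _; apply: measurable_funB; apply: mdot.
by apply: measurable_funB; apply: mdot.
Qed.

Lemma phi_ge0 v : 0 <= phi v.
Proof. by apply: ln_ge0; rewrite lerDl expR_ge0. Qed.

Lemma Fcon_ge0 f x y z : 0 <= Fcon f x y z.
Proof. by rewrite Fcon_E phi_ge0. Qed.

Lemma Fdis_ge0 g h x y z : 0 <= Fdis g h x y z.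
Proof.
rewrite /Fdis /=.
set a := dotv _ _; set b := dotv _ _; set s := dotv _ _; set t := dotv _ _.
have S1 (u v : R) : 0 <= softmax1 u v <= 1.
  rewrite sm1E; have hK := expR_gt0 (v - u).
  have hy : 0 < 1 + expR (v - u) by rewrite addr_gt0.
  by rewrite invr_ge0 ltW //= invf_le1 // lerDl ltW.
have S2 (u v : R) : softmax2 u v = 1 - softmax1 u v.
  rewrite sm1E sm2E; have hK := expR_gt0 (v - u).
  have hy : 0 < 1 + expR (v - u) by rewrite addr_gt0.
  by field; rewrite gt_eqF.
have S2' (u v : R) : 0 <= softmax2 u v <= 1.
  by rewrite S2; have /andP[? ?] := S1 u v; apply/andP; split; lra.
have l1 : ln (softmax1 s t) <= 0 by apply: ln_le0; have /andP[] := S1 s t.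
have l2 : ln (softmax2 s t) <= 0 by apply: ln_le0; have /andP[] := S2' s t.
have p1 : softmax1 a b * ln (softmax1 s t) <= 0.
  by apply: mulr_ge0_le0 => //; have /andP[] := S1 a b.
have p2 : softmax2 a b * ln (softmax2 s t) <= 0.
  by apply: mulr_ge0_le0 => //; have /andP[] := S2' a b.
lra.
Qed.

Lemma M3_lin (G H : X -> X -> X -> R) (a c : R) : M3 G -> M3 H ->
  M3 (fun x y z => a * G x y z + H x y z + c).
Proof.
move=> mG mH; rewrite /M3.
apply: measurable_funD; last exact: measurable_cst.
apply: measurable_funD => //.
apply: measurable_funM => //; exact: measurable_cst.
Qed.

End Main.

Theorem lemma1 (R : realType) (dX : measure_display) (X : measurableType dX)
  (n : nat) (C : countType) (mu : C -> R) (D : C -> probability X R)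
  (g h : X -> 'rV[R]_n) :
  (0 < n)%N -> is_pmf mu -> is_encoder g -> is_encoder h ->
  (L_con mu D g <= alpha_c%:E * L_con mu D h + L_dis mu D g h + beta_c%:E)%E /\
  (alpha_c%:E * L_con mu D h + L_dis mu D g h + beta'_c%:E <= L_con mu D g)%E.
Proof.
move=> _ pmf eg eh.
have -> : L_con mu D g = TE C mu D (Fcon g) by [].
have -> : L_con mu D h = TE C mu D (Fcon h) by [].
have -> : L_dis mu D g h = TE C mu D (Fdis g h) by [].
have mFg := M3_Fcon g eg; have mFh := M3_Fcon h eh; have mFd := M3_Fdis g h eg eh.
have Fg0 := @Fcon_ge0 R dX X n g; have Fh0 := @Fcon_ge0 R dX X n h.
have Fd0 := @Fdis_ge0 R dX X n g h.
have al0 : (0 <= alpha_c :> R)%R.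
  rewrite /alpha_c; apply: divr_ge0; apply: ltW; [apply: mulr_gt0 => //; exact: expR_gt0|].
  by apply: addr_gt0 => //; exact: expR_gt0.
have TEg0 : (0 <= TE C mu D (Fcon g))%E.
  apply: esum_ge0 => cc _; apply: mule_ge0; first by case: pmf => m0 _; rewrite lee_fin mulr_ge0.
  exact: I3_ge0.
split.
- pose bp := `|(beta_c : R)|; pose bn := `|(beta_c : R)| - (beta_c : R).
  have bE : (beta_c : R) = bp - bn by rewrite /bp /bn; ring.
  have bp0 : (0 <= bp)%R by exact: normr_ge0.
  have bn0 : (0 <= bn)%R by rewrite /bn subr_ge0 ler_norm.
  have pw x y z : (0 * Fdis g h x y z + Fcon g x y z + bn <=
                   alpha_c * Fcon h x y z + Fdis g h x y z + bp)%R.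
    rewrite Fdis_E !Fcon_E.
    set d := (dotv (g x) (g z) - dotv (g x) (g y))%R.
    set u := (dotv (h x) (h z) - dotv (h x) (h y))%R.
    have hd : (d <= 2)%R.
      have := dotv_bound (_ : 'rV_n) (_ : 'rV_n) (eg.2 x) (eg.2 z); have := dotv_bound (_ : 'rV_n) (_ : 'rV_n) (eg.2 x) (eg.2 y).
      move=> /andP[? ?] /andP[? ?]; rewrite /d; lra.
    have := upper_pw _ _ (expR_gt0 u) hd.
    rewrite sigE bE.
    lra.
  have L0 x y z : (0 <= 0 * Fdis g h x y z + Fcon g x y z + bn)%R.
    by rewrite mul0r add0r addr_ge0.
  have := @TE_le _ _ _ C mu D pmf _ _ (@M3_lin _ _ _ _ _ 0 bn mFd mFg) (@M3_lin _ _ _ _ _ alpha_c bp mFh mFd) L0 pw.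
  rewrite (@TE_lin _ _ _ C mu D pmf (Fdis g h) (Fcon g) 0 bn (lexx 0) bn0 mFd mFg Fd0 Fg0).
  rewrite (@TE_lin _ _ _ C mu D pmf (Fcon h) (Fdis g h) alpha_c bp al0 bp0 mFh mFd Fh0 Fd0).
  rewrite mul0e add0e => H.
  have H2 := leeD H (lexx (- bn%:E)%E).
  rewrite addeK // -addeA -EFinB -bE in H2.
  exact: H2.
- pose bp := `|(beta'_c : R)|; pose bn := `|(beta'_c : R)| - (beta'_c : R).
  have bE : (beta'_c : R) = bp - bn by rewrite /bp /bn; ring.
  have bp0 : (0 <= bp)%R by exact: normr_ge0.
  have bn0 : (0 <= bn)%R by rewrite /bn subr_ge0 ler_norm.
  have pw x y z : (alpha_c * Fcon h x y z + Fdis g h x y z + bp <=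
                   0 * Fdis g h x y z + Fcon g x y z + bn)%R.
    rewrite Fdis_E !Fcon_E.
    set d := (dotv (g x) (g z) - dotv (g x) (g y))%R.
    set u := (dotv (h x) (h z) - dotv (h x) (h y))%R.
    have hd : (-2 <= d)%R.
      have := dotv_bound (_ : 'rV_n) (_ : 'rV_n) (eg.2 x) (eg.2 z); have := dotv_bound (_ : 'rV_n) (_ : 'rV_n) (eg.2 x) (eg.2 y).
      move=> /andP[? ?] /andP[? ?]; rewrite /d; lra.
    have hu : (expR u <= expR 2)%R.
      rewrite ler_expR.
      have := dotv_bound (_ : 'rV_n) (_ : 'rV_n) (eh.2 x) (eh.2 z); have := dotv_bound (_ : 'rV_n) (_ : 'rV_n) (eh.2 x) (eh.2 y).
      move=> /andP[? ?] /andP[? ?]; rewrite /u; lra.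
    have := lower_pw _ _ (expR_gt0 u) hu hd.
    rewrite sigE bE.
    lra.
  have L0 x y z : (0 <= alpha_c * Fcon h x y z + Fdis g h x y z + bp)%R.
    by rewrite addr_ge0 // addr_ge0 // mulr_ge0.
  have := @TE_le _ _ _ C mu D pmf _ _ (@M3_lin _ _ _ _ _ alpha_c bp mFh mFd) (@M3_lin _ _ _ _ _ 0 bn mFd mFg) L0 pw.
  rewrite (@TE_lin _ _ _ C mu D pmf (Fdis g h) (Fcon g) 0 bn (lexx 0) bn0 mFd mFg Fd0 Fg0).
  rewrite (@TE_lin _ _ _ C mu D pmf (Fcon h) (Fdis g h) alpha_c bp al0 bp0 mFh mFd Fh0 Fd0).
  rewrite mul0e add0e => H.
  have H2 := leeD H (lexx (- bn%:E)%E).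
  rewrite addeK // -addeA -EFinB -bE in H2.
  exact: H2.
Qed.
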